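(* Let $H\in\mathbb{R}^{n\times n}$ and $M\in\mathbb{R}^{m\times m}$ be symmetric positive semidefinite and $A\in\mathbb{R}^{m\times n}$. Let $l\neq k$ be indices and $\mathcal{B}\subseteq\{1,\dots,n\}\setminus\{l,k\}$. Assume that the linear system in the unknowns $(\Delta x_l,\Delta x_k,\Delta x_{\mathcal{B}},\Delta y,\Delta z_l)$ \[ \begin{aligned} h_{ll}\Delta x_l+h_{kl}\Delta x_k+h_{\mathcal{B}l}^T\Delta x_{\mathcal{B}}-a_l^T\Delta y-\Delta z_l&=0,\\ h_{kl}\Delta x_l+h_{kk}\Delta x_k+h_{\mathcal{B}k}^T\Delta x_{\mathcal{B}}-a_k^T\Delta y&=0,\\ h_{\mathcal{B}l}\Delta x_l+h_{\mathcal{B}k}\Delta x_k+H_{\mathcal{B}\mathcal{B}}\Delta x_{\mathcal{B}}-A_{\mathcal{B}}^T\Delta y&=0,\\ a_l\Delta x_l+a_k\Delta x_k+A_{\mathcal{B}}\Delta x_{\mathcal{B}}+M\Delta y&=0,\\ \Delta x_l+\Delta z_l&=1 \end{aligned} \] has a unique solution, and that in it $\Delta x_k\neq 0$. Then the matrices \[ K_l=\begin{pmatrix}h_{ll}&h_{\mathcal{B}l}^T&a_l^T\\ h_{\mathcal{B}l}&H_{\mathcal{B}\mathcal{B}}&A_{\mathcal{B}}^T\\ a_l&A_{\mathcal{B}}&-M\end{pmatrix}\quad\text{and}\quad K_k=\begin{pmatrix}h_{kk}&h_{\mathcal{B}k}^T&a_k^T\\ h_{\mathcal{B}k}&H_{\mathcal{B}\mathcal{B}}&A_{\mathcal{B}}^T\\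 a_k&A_{\mathcal{B}}&-M\end{pmatrix} \] are nonsingular.
   Context: $h_{ij}$ denotes the $(i,j)$ entry of $H$; $h_{\mathcal{B}j}$ the column vector $(h_{ij})_{i\in\mathcal{B}}$; $H_{\mathcal{B}\mathcal{B}}$ the principal submatrix of $H$ with rows and columns in $\mathcal{B}$; $a_j$ the $j$th column of $A$; $A_{\mathcal{B}}$ the matrix of columns of $A$ indexed by $\mathcal{B}$. *)

(* Defs.v *)
From HB Require Import structures.
From mathcomp Require Import all_boot all_order all_algebra.
Set Implicit Arguments. Unset Strict Implicit. Unset Printing Implicit Defensive.
Import Order.TTheory GRing.Theory Num.Theory.
Local Open Scope ring_scope.

Definition sym_psd (R : realFieldType) (n : nat) (H : 'M[R]_n) : Prop :=
  H^T = H /\ forall x : 'cV[R]_n, 0 <= (x^T *m H *m x) 0 0.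

Section Blocks.
Variables (R : realFieldType) (n m : nat).
Variables (H : 'M[R]_n) (M : 'M[R]_m) (A : 'M[R]_(m, n)) (B : {set 'I_n}).

(* the elements of B, in increasing order *)
Definition Bidx (i : 'I_#|B|) : 'I_n := enum_val i.

Definition HBB : 'M[R]_#|B| := \matrix_(i, j) H (Bidx i) (Bidx j).
Definition hB (j : 'I_n) : 'cV[R]_#|B| := \col_i H (Bidx i) j.
Definition AB : 'M[R]_(m, #|B|) := \matrix_(i, j) A i (Bidx j).
Definition acol (j : 'I_n) : 'cV[R]_m := col j A.

Definition Kmat (j : 'I_n) : 'M[R]_(1 + #|B| + m) :=
  block_mx (block_mx (H j j)%:M (hB j)^T (hB j) HBB)
           (col_mx (acol j)^T AB^T)
           (row_mx (acol j) AB)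
           (- M).

Definition lin_sys (l k : 'I_n) (dxl dxk : R) (dxB : 'cV[R]_#|B|)
    (dy : 'cV[R]_m) (dzl : R) : Prop :=
  [/\ H l l * dxl + H k l * dxk + ((hB l)^T *m dxB) 0 0
        - ((acol l)^T *m dy) 0 0 - dzl = 0,
      H k l * dxl + H k k * dxk + ((hB k)^T *m dxB) 0 0
        - ((acol k)^T *m dy) 0 0 = 0,
      dxl *: hB l + dxk *: hB k + HBB *m dxB - AB^T *m dy = 0,
      dxl *: acol l + dxk *: acol k + AB *m dxB + M *m dy = 0
    & dxl + dzl = 1].
End Blocks.

Arguments lin_sys [R n m] H M A B l k dxl dxk dxB dy dzl.
Arguments Kmat [R n m] H M A B j.

(* Main.v *)
Require Import Defs.
From HB Require Import structures.
From mathcomp Require Import all_boot all_order all_algebra.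
From mathcomp Require Import ring lra.
Set Implicit Arguments. Unset Strict Implicit. Unset Printing Implicit Defensive.
Import Order.TTheory GRing.Theory Num.Theory.
Local Open Scope ring_scope.

Definition ev (R : realFieldType) n (j : 'I_n) : 'cV[R]_n := delta_mx j 0.
Definition EB (R : realFieldType) n (B : {set 'I_n}) : 'M[R]_(n, #|B|) :=
  \matrix_(p, i) (p == @Bidx n B i)%:R.

Lemma mulEB (R : realFieldType) n q (B : {set 'I_n}) (V : 'M[R]_(q, n)) :
  V *m EB R B = \matrix_(p, i) V p (@Bidx n B i).
Proof.
apply/matrixP => p i; rewrite !mxE (bigD1 (@Bidx n B i)) //= mxE eqxx mulr1.
rewrite big1 ?addr0 // => r /negbTE hr; by rewrite mxE hr mulr0.
Qed.

Lemma mulEBt (R : realFieldType) n q (B : {set 'I_n}) (V : 'M[R]_(n, q)) :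
  (EB R B)^T *m V = \matrix_(i, p) V (@Bidx n B i) p.
Proof.
by rewrite -[V]trmxK -trmx_mul mulEB; apply/matrixP => i p; rewrite !mxE.
Qed.

Lemma evTE (R : realFieldType) n q (a : 'I_n) (V : 'M[R]_(n, q)) :
  (ev R a)^T *m V = row a V.
Proof. by rewrite /ev trmx_delta rowE. Qed.

Lemma ev_quad (R : realFieldType) n (a b : 'I_n) (V : 'M[R]_n) :
  ((ev R a)^T *m V *m ev R b) 0 0 = V a b.
Proof. by rewrite evTE /ev -colE !mxE. Qed.

Lemma hB_E (R : realFieldType) n (H : 'M[R]_n) B j :
  hB H B j = (EB R B)^T *m H *m ev R j.
Proof. by rewrite /ev -colE mulEBt; apply/matrixP => i z; rewrite !mxE. Qed.

Lemma HBB_E (R : realFieldType) n (H : 'M[R]_n) B :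
  HBB H B = (EB R B)^T *m H *m EB R B.
Proof. by rewrite mulEB mulEBt; apply/matrixP => i z; rewrite !mxE. Qed.

Lemma AB_E (R : realFieldType) n m (A : 'M[R]_(m, n)) B :
  AB A B = A *m EB R B.
Proof. by rewrite mulEB; apply/matrixP => i z; rewrite !mxE. Qed.

Lemma acol_E (R : realFieldType) n m (A : 'M[R]_(m, n)) j :
  acol A j = A *m ev R j.
Proof. by rewrite /acol colE. Qed.

Definition Xv (R : realFieldType) n (B : {set 'I_n}) (l k : 'I_n) (xl xk : R)
  (xB : 'cV[R]_#|B|) : 'cV[R]_n :=
  xl *: ev R l + xk *: ev R k + EB R B *m xB.

Definition Fv (R : realFieldType) n m (H : 'M[R]_n) (A : 'M[R]_(m, n))
  (X : 'cV[R]_n) (y : 'cV[R]_m) : 'cV[R]_n := H *m X - A^T *m y.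

Lemma entry_ev (R : realFieldType) n (j : 'I_n) (V : 'cV[R]_n) :
  V j 0 = ((ev R j)^T *m V) 0 0.
Proof. by rewrite evTE mxE. Qed.


Lemma ent4 (R : realFieldType) p q (a b : R) (U V W Z : 'M[R]_(p, q)) i j :
  (a *: U + b *: V + W - Z) i j = a * U i j + b * V i j + W i j - Z i j.
Proof. by rewrite !mxE. Qed.

Lemma HsymE (R : realFieldType) n (H : 'M[R]_n) i j : H^T = H -> H i j = H j i.
Proof. by move=> HT; rewrite -{1}HT mxE. Qed.

Lemma T1 (R : realFieldType) n m (H : 'M[R]_n) (A : 'M[R]_(m, n)) (B : {set 'I_n}) (l k : 'I_n)
  (xl xk : R) (xB : 'cV[R]_#|B|) (y : 'cV[R]_m) : H^T = H ->
  H l l * xl + H k l * xk + ((hB H B l)^T *m xB) 0 0 - ((acol A l)^T *m y) 0 0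
  = (Fv H A (Xv l k xl xk xB) y) l 0.
Proof.
move=> HT.
rewrite /Fv /Xv hB_E acol_E entry_ev mulmxBr !mulmxDr !mulmxA -!scalemxAr.
rewrite !trmx_mul trmxK HT ent4 !ev_quad !mulmxA (HsymE _ _ HT).
by rewrite (mulrC xl) (mulrC xk).
Qed.

Lemma T2 (R : realFieldType) n m (H : 'M[R]_n) (A : 'M[R]_(m, n)) (B : {set 'I_n}) (l k : 'I_n)
  (xl xk : R) (xB : 'cV[R]_#|B|) (y : 'cV[R]_m) : H^T = H ->
  H k l * xl + H k k * xk + ((hB H B k)^T *m xB) 0 0 - ((acol A k)^T *m y) 0 0
  = (Fv H A (Xv l k xl xk xB) y) k 0.
Proof.
move=> HT.
rewrite /Fv /Xv hB_E acol_E entry_ev mulmxBr !mulmxDr !mulmxA -!scalemxAr.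
rewrite !trmx_mul trmxK HT ent4 !ev_quad !mulmxA.
by rewrite (mulrC xl) (mulrC xk).
Qed.

Lemma T3 (R : realFieldType) n m (H : 'M[R]_n) (A : 'M[R]_(m, n)) (B : {set 'I_n}) (l k : 'I_n)
  (xl xk : R) (xB : 'cV[R]_#|B|) (y : 'cV[R]_m) :
  xl *: hB H B l + xk *: hB H B k + HBB H B *m xB - (AB A B)^T *m y
  = (EB R B)^T *m Fv H A (Xv l k xl xk xB) y.
Proof.
rewrite /Fv /Xv !hB_E HBB_E AB_E trmx_mul mulmxBr !mulmxDr !mulmxA -!scalemxAr.
by [].
Qed.

Lemma T4 (R : realFieldType) n m (M : 'M[R]_m) (A : 'M[R]_(m, n)) (B : {set 'I_n}) (l k : 'I_n)
  (xl xk : R) (xB : 'cV[R]_#|B|) (y : 'cV[R]_m) :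
  xl *: acol A l + xk *: acol A k + AB A B *m xB + M *m y
  = A *m Xv l k xl xk xB + M *m y.
Proof. by rewrite !acol_E AB_E /Xv !mulmxDr !scalemxAr mulmxA. Qed.

Definition XS (R : realFieldType) n m (H : 'M[R]_n) (M : 'M[R]_m) (A : 'M[R]_(m, n))
  (B : {set 'I_n}) (l k : 'I_n) (xl xk : R) (xB : 'cV[R]_#|B|) (y : 'cV[R]_m)
  (zl c : R) : Prop :=
 [/\ (Fv H A (Xv l k xl xk xB) y) l 0 = zl,
     (Fv H A (Xv l k xl xk xB) y) k 0 = 0,
     (EB R B)^T *m Fv H A (Xv l k xl xk xB) y = 0,
     A *m Xv l k xl xk xB + M *m y = 0 & xl + zl = c].
Arguments XS [R n m] H M A B l k xl xk xB y zl c.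

Lemma LS_XS (R : realFieldType) n m (H : 'M[R]_n) (M : 'M[R]_m) (A : 'M[R]_(m, n))
  (B : {set 'I_n}) (l k : 'I_n) (xl xk : R) (xB : 'cV[R]_#|B|) (y : 'cV[R]_m) (zl : R) :
  H^T = H ->
  lin_sys H M A B l k xl xk xB y zl <-> XS H M A B l k xl xk xB y zl 1.
Proof.
move=> HT; rewrite /lin_sys /XS T1 // T2 // T3 T4.
split; case=> e1 e2 e3 e4 e5; split => //.
- by apply/eqP; rewrite -subr_eq0 e1.
- by rewrite e1 subrr.
Qed.

Lemma AC6 (V : zmodType) (p q r s u w : V) :
  p + q + (r + s) + (u + w) = p + r + u + (q + s + w).
Proof. by rewrite (addrACA p q r s) (addrACA (p + r) (q + s) u w). Qed.

Lemma Xv_add (R : realFieldType) n (B : {set 'I_n}) (l k : 'I_n) (a1 a2 b1 b2 : R)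
  (v1 v2 : 'cV[R]_#|B|) :
  Xv l k (a1 + a2) (b1 + b2) (v1 + v2) = Xv l k a1 b1 v1 + Xv l k a2 b2 v2.
Proof.
rewrite /Xv !scalerDl mulmxDr; exact: AC6.
Qed.

Lemma Xv_scale (R : realFieldType) n (B : {set 'I_n}) (l k : 'I_n) (c a b : R)
  (v : 'cV[R]_#|B|) :
  Xv l k (c * a) (c * b) (c *: v) = c *: Xv l k a b v.
Proof. by rewrite /Xv !scalerDr !scalerA scalemxAr. Qed.

Lemma Fv_add (R : realFieldType) n m (H : 'M[R]_n) (A : 'M[R]_(m, n)) X1 X2 y1 y2 :
  Fv H A (X1 + X2) (y1 + y2) = Fv H A X1 y1 + Fv H A X2 y2.
Proof. by rewrite /Fv !mulmxDr opprD addrACA. Qed.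

Lemma Fv_scale (R : realFieldType) n m (H : 'M[R]_n) (A : 'M[R]_(m, n)) (c : R) X y :
  Fv H A (c *: X) (c *: y) = c *: Fv H A X y.
Proof. by rewrite /Fv scalerBr !scalemxAr. Qed.

Lemma XS_add (R : realFieldType) n m (H : 'M[R]_n) (M : 'M[R]_m) (A : 'M[R]_(m, n))
  (B : {set 'I_n}) (l k : 'I_n) xl1 xk1 xB1 y1 zl1 c1 xl2 xk2 xB2 y2 zl2 c2 :
  XS H M A B l k xl1 xk1 xB1 y1 zl1 c1 -> XS H M A B l k xl2 xk2 xB2 y2 zl2 c2 ->
  XS H M A B l k (xl1 + xl2) (xk1 + xk2) (xB1 + xB2) (y1 + y2) (zl1 + zl2) (c1 + c2).
Proof.
rewrite /XS Xv_add Fv_add; case=> a1 a2 a3 a4 a5 [b1 b2 b3 b4 b5]; split.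
- by rewrite mxE a1 b1.
- by rewrite mxE a2 b2 addr0.
- by rewrite mulmxDr a3 b3 addr0.
- by rewrite mulmxDr (mulmxDr M) addrACA a4 b4 addr0.
- by rewrite addrACA a5 b5.
Qed.

Lemma XS_scale (R : realFieldType) n m (H : 'M[R]_n) (M : 'M[R]_m) (A : 'M[R]_(m, n))
  (B : {set 'I_n}) (l k : 'I_n) xl xk xB y zl c (a : R) :
  XS H M A B l k xl xk xB y zl c ->
  XS H M A B l k (a * xl) (a * xk) (a *: xB) (a *: y) (a * zl) (a * c).
Proof.
rewrite /XS Xv_scale Fv_scale; case=> a1 a2 a3 a4 a5; split.
- by rewrite mxE a1.
- by rewrite mxE a2 mulr0.
- by rewrite -scalemxAr a3 scaler0.
- by rewrite -!scalemxAr -scalerDr a4 scaler0.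
- by rewrite -mulrDr a5.
Qed.

Lemma add_idl (V : zmodType) (a b : V) : a + b = a -> b = 0.
Proof. by move=> h; rewrite -(addKr a b) h addNr. Qed.

Lemma Z0 (R : realFieldType) n m (H : 'M[R]_n) (M : 'M[R]_m) (A : 'M[R]_(m, n))
  (B : {set 'I_n}) (l k : 'I_n) dxl dxk dxB dy dzl :
  H^T = H ->
  lin_sys H M A B l k dxl dxk dxB dy dzl ->
  (forall (ex el : R) (eB : 'cV[R]_#|B|) (ey : 'cV[R]_m) (ez : R),
            lin_sys H M A B l k ex el eB ey ez ->
            [/\ ex = dxl, el = dxk, eB = dxB, ey = dy & ez = dzl]) ->
  forall xl xk xB y zl, XS H M A B l k xl xk xB y zl 0 ->
  [/\ xl = 0, xk = 0, xB = 0, y = 0 & zl = 0].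
Proof.
move=> HT hd hu xl xk xB y zl hx.
have := XS_add ((@LS_XS _ _ _ H M A B l k _ _ _ _ _ HT).1 hd) hx.
rewrite addr0 => /(@LS_XS _ _ _ H M A B l k _ _ _ _ _ HT) /hu [e1 e2 e3 e4 e5].
by split; apply: add_idl; eassumption.
Qed.

Lemma Z1 (R : realFieldType) n m (H : 'M[R]_n) (M : 'M[R]_m) (A : 'M[R]_(m, n))
  (B : {set 'I_n}) (l k : 'I_n) dxl dxk dxB dy dzl :
  H^T = H ->
  lin_sys H M A B l k dxl dxk dxB dy dzl ->
  (forall (ex el : R) (eB : 'cV[R]_#|B|) (ey : 'cV[R]_m) (ez : R),
            lin_sys H M A B l k ex el eB ey ez ->
            [/\ ex = dxl, el = dxk, eB = dxB, ey = dy & ez = dzl]) ->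
  dxk != 0 ->
  forall xl xB y zl c, XS H M A B l k xl 0 xB y zl c ->
  [/\ xl = 0, xB = 0, y = 0 & zl = 0].
Proof.
move=> HT hd hu hk xl xB y zl c hx.
have [c0|cn0] := eqVneq c 0.
  by move: hx; rewrite c0 => /(Z0 HT hd hu) [].
have := XS_scale (c^-1) hx; rewrite mulVf // mulr0.
move=> /(@LS_XS _ _ _ H M A B l k _ _ _ _ _ HT) /hu [_ e _ _ _].
by move: hk; rewrite -e eqxx.
Qed.

Lemma ent_add (R : realFieldType) p q (U V : 'M[R]_(p, q)) i j :
  (U + V) i j = U i j + V i j.
Proof. by rewrite mxE. Qed.
Lemma ent_scale (R : realFieldType) p q (a : R) (U : 'M[R]_(p, q)) i j :
  (a *: U) i j = a * U i j.
Proof. by rewrite mxE. Qed.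
Lemma ent_opp (R : realFieldType) p q (U : 'M[R]_(p, q)) i j :
  (- U) i j = - U i j.
Proof. by rewrite mxE. Qed.
Lemma tr11 (R : realFieldType) (U : 'M[R]_1) : U 0 0 = U^T 0 0.
Proof. by rewrite mxE. Qed.

Lemma psd_zero (R : realFieldType) n (H : 'M[R]_n) (X : 'cV[R]_n) :
  sym_psd H -> (X^T *m H *m X) 0 0 = 0 -> H *m X = 0.
Proof.
case=> HT hp q0; apply/matrixP => i j; rewrite ord1 [RHS]mxE.
set b := (H *m X) i 0; set c := H i i.
have c0 : 0 <= c by rewrite /c -ev_quad; apply: hp.
have key : forall t, 0 <= 2 * t * b + t * t * c.
  move=> t; have := hp (X + t *: ev R i).
  rewrite [(X + _)^T]linearD /= [(_ *: _)^T]linearZ /= !mulmxDr !mulmxDl.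
  rewrite -!scalemxAl -!scalemxAr !ent_add !ent_scale ev_quad q0.
  rewrite [(X^T *m H *m ev R i) 0 0]tr11 !trmx_mul trmxK HT.
  rewrite -[(ev R i)^T *m H *m X]mulmxA -!entry_ev -/b -/c.
  move=> h; apply: le_trans h _; rewrite le_eqVlt; apply/orP; left; apply/eqP; ring.
pose t := - b / (c + 1).
have c1 : c + 1 != 0 by rewrite gt_eqF // ltr_wpDl.
have ht : t * (c + 1) = - b by rewrite /t mulfVK.
have := key t; nra.
Qed.

Lemma kerK (R : realFieldType) n m p (H : 'M[R]_n) (M : 'M[R]_m) (A : 'M[R]_(m, n))
  (E : 'M[R]_(n, p)) (x : 'cV[R]_p) (v : 'cV[R]_m) :
  sym_psd H -> sym_psd M ->
  block_mx (E^T *m H *m E) (A *m E)^T (A *m E) (- M) *m col_mx x v = 0 ->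
  [/\ H *m (E *m x) = 0, M *m v = 0, E^T *m (A^T *m v) = 0 & A *m (E *m x) = 0].
Proof.
move=> pH pM; rewrite mul_block_col => /eqP; rewrite col_mx_eq0 => /andP[/eqP e1 /eqP e2].
have e1' : E^T *m H *m E *m x = - ((A *m E)^T *m v).
  by apply/eqP; rewrite -addr_eq0 e1.
have e2' : A *m E *m x = M *m v.
  by apply/eqP; rewrite -subr_eq0 -mulNmx e2.
have MT : M^T = M by case: pM.
have q : (E *m x)^T *m H *m (E *m x) = - (v^T *m M *m v).
  have -> : (E *m x)^T *m H *m (E *m x) = x^T *m (E^T *m H *m E *m x).
    by rewrite trmx_mul !mulmxA.
  rewrite e1' mulmxN mulmxA -trmx_mul e2' trmx_mul MT.
  by [].
have q0 : ((E *m x)^T *m H *m (E *m x)) 0 0 = 0 /\ (v^T *m M *m v) 0 0 = 0.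
  have h1 := pH.2 (E *m x); have h2 := pM.2 v.
  rewrite q ent_opp in h1 *; split; lra.
case: q0 => q1 q2.
have hx := psd_zero pH q1; have hv := psd_zero pM q2.
split => //.
- by rewrite mulmxA -trmx_mul; apply/eqP; rewrite -oppr_eq0 -e1' -!mulmxA hx mulmx0.
- by rewrite mulmxA e2' hv.
Qed.


Lemma Kmat_E (R : realFieldType) n m (H : 'M[R]_n) (M : 'M[R]_m) (A : 'M[R]_(m, n))
  (B : {set 'I_n}) (j : 'I_n) : H^T = H ->
  Kmat H M A B j =
  block_mx ((row_mx (ev R j) (EB R B))^T *m H *m row_mx (ev R j) (EB R B))
           (A *m row_mx (ev R j) (EB R B))^T (A *m row_mx (ev R j) (EB R B)) (- M).
Proof.
move=> HT; rewrite /Kmat tr_row_mx mul_col_mx mul_col_row mul_mx_row tr_row_mx.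
congr (block_mx (block_mx _ _ _ _) (col_mx _ _) (row_mx _ _) _).
- by apply/matrixP => a b; rewrite !ord1 ev_quad mxE.
- by rewrite hB_E !trmx_mul trmxK HT mulmxA.
- by rewrite hB_E.
- by rewrite HBB_E.
- by rewrite acol_E.
- by rewrite AB_E.
- by rewrite acol_E.
- by rewrite AB_E.
Qed.

Lemma evTr (R : realFieldType) n (j : 'I_n) (w : 'cV[R]_n) :
  (w^T *m ev R j) 0 0 = w j 0.
Proof. by rewrite /ev -colE !mxE. Qed.

Lemma unit_of (R : realFieldType) n m (H : 'M[R]_n) (M : 'M[R]_m) (A : 'M[R]_(m, n))
  (B : {set 'I_n}) (j : 'I_n) : sym_psd H -> sym_psd M ->
  (forall (s : R) (xB : 'cV[R]_#|B|) (v : 'cV[R]_m),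
     H *m (s *: ev R j + EB R B *m xB) = 0 -> M *m v = 0 ->
     (A^T *m v) j 0 = 0 -> (EB R B)^T *m (A^T *m v) = 0 ->
     A *m (s *: ev R j + EB R B *m xB) = 0 -> [/\ s = 0, xB = 0 & v = 0]) ->
  Kmat H M A B j \in unitmx.
Proof.
move=> pH pM hj; rewrite -unitmx_tr -row_free_unit; apply: inj_row_free => r hr.
have hK : Kmat H M A B j *m r^T = 0.
  by have := congr1 trmx hr; rewrite trmx_mul trmxK trmx0.
set w := r^T in hK.
rewrite (Kmat_E _ _ _ _ pH.1) -(vsubmxK w) -(vsubmxK (usubmx w)) in hK.
case/(kerK pH pM): hK => h1 h2 h3 h4.
rewrite mul_row_col (mx11_scalar (usubmx (usubmx w))) mul_mx_scalar in h1 h4.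
move: h3; rewrite tr_row_mx mul_col_mx => /eqP; rewrite col_mx_eq0 => /andP[/eqP h3 /eqP h3'].
have h3j : (A^T *m dsubmx w) j 0 = 0.
  by have := congr1 (fun Z : 'M_1 => Z 0 0) h3; rewrite /= -entry_ev => ->; rewrite mxE.
have [s0 xB0 v0] := hj _ _ _ h1 h2 h3j h3' h4.
apply: trmx_inj; rewrite trmx0 -/w -(vsubmxK w) -(vsubmxK (usubmx w)) xB0 v0.
have -> : usubmx (usubmx w) = 0 by apply/matrixP => a b; rewrite !ord1 s0 mxE.
by rewrite !col_mx0.
Qed.

Unset Implicit Arguments.

Theorem proposition9 (R : realFieldType) (n m : nat)
  (H : 'M[R]_n) (M : 'M[R]_m) (A : 'M[R]_(m, n))
  (l k : 'I_n) (B : {set 'I_n}) :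
  sym_psd H -> sym_psd M -> l != k -> l \notin B -> k \notin B ->
  (exists (dxl dxk : R) (dxB : 'cV[R]_#|B|) (dy : 'cV[R]_m) (dzl : R),
     [/\ lin_sys H M A B l k dxl dxk dxB dy dzl,
         (forall (ex el : R) (eB : 'cV[R]_#|B|) (ey : 'cV[R]_m) (ez : R),
            lin_sys H M A B l k ex el eB ey ez ->
            [/\ ex = dxl, el = dxk, eB = dxB, ey = dy & ez = dzl])
       & dxk != 0]) ->
  Kmat H M A B l \in unitmx /\ Kmat H M A B k \in unitmx.
Proof.
move=> pH pM _ _ _ [dxl [dxk [dxB [dy [dzl [hd hu hk]]]]]].
have HT := pH.1; have MT := pM.1.
have Z0' := Z0 HT hd hu; have Z1' := Z1 HT hd hu hk.
have [_ _ _ d4 _] := (@LS_XS _ _ _ H M A B l k _ _ _ _ _ HT).1 hd.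
have stepB : forall v : 'cV[R]_m, M *m v = 0 -> (A^T *m v) k 0 = 0 ->
    (EB R B)^T *m (A^T *m v) = 0 -> v = 0.
  move=> v h2 hak h4.
  have hx : XS H M A B l k 0 0 0 v (- (A^T *m v) l 0) (0 + - (A^T *m v) l 0).
    rewrite /XS /Fv /Xv !scale0r mulmx0 !addr0 mulmx0 sub0r.
    by split; rewrite ?ent_opp ?hak ?oppr0 ?mulmxN ?h4 ?oppr0 ?mulmx0 ?add0r ?h2.
  by have [_ _ ->] := Z1' _ _ _ _ _ hx.
split.
- apply: unit_of => // s xB v h1 h2 h3 h4 h5.
  have hx : XS H M A B l k s 0 xB 0 0 s.
    rewrite /XS /Fv /Xv scale0r addr0 !mulmx0 subr0 h1 h5 addr0.
    by split; rewrite ?mxE ?mulmx0 ?addr0.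
  have [s0 xB0 _ _] := Z1' _ _ _ _ _ hx.
  split => //; apply: stepB => //.
  have : (v^T *m (A *m Xv l k dxl dxk dxB + M *m dy)) 0 0 = 0.
    by rewrite d4 mulmx0 mxE.
  rewrite mulmxDr !mulmxA.
  have -> : v^T *m A = (A^T *m v)^T by rewrite trmx_mul trmxK.
  have -> : v^T *m M = (M *m v)^T by rewrite trmx_mul MT.
  rewrite h2 trmx0 mul0mx addr0 /Xv !mulmxDr -!scalemxAr mulmxA.
  have -> : (A^T *m v)^T *m EB R B = ((EB R B)^T *m (A^T *m v))^T.
    by rewrite [RHS]trmx_mul trmxK.
  rewrite h4 trmx0 mul0mx addr0 ent_add !ent_scale !evTr h3 mulr0 add0r.
  by move/eqP; rewrite mulf_eq0 (negbTE hk) /= => /eqP.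
- apply: unit_of => // s xB v h1 h2 h3 h4 h5.
  have hx : XS H M A B l k 0 s xB 0 0 0.
    rewrite /XS /Fv /Xv scale0r add0r !mulmx0 subr0 h1 h5 addr0.
    by split; rewrite ?mxE ?mulmx0 ?addr0.
  have [_ s0 xB0 _ _] := Z0' _ _ _ _ _ hx.
  by split => //; apply: stepB.
Qed.
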